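(* Let $A\in\mathbb{Z}^{m\times n}$, $b\in\mathbb{Z}^m$. If $Ax\leq b$ is totally dual $p$-adic and totally dual $q$-adic for distinct primes $p,q$, then $\{x:Ax\leq b\}$ is an integral polyhedron.
   Context: For a prime $p$, a $p$-adic rational is a number $a/p^k$ with $a,k\in\mathbb{Z}$, $k\ge0$; a vector is $p$-adic if all entries are $p$-adic rationals. A system $Ax\le b$ with integral $A,b$ is totally dual $p$-adic if for every integral $w$ for which $\min\{b^\top y: A^\top y=w,\ y\ge \mathbf{0}\}$ has an optimal solution, it has a $p$-adic optimal solution. A rational polyhedron is integral if every nonempty face of it contains an integral point. *)

(* Defs.v *)
From HB Require Import structures.
From mathcomp Require Import all_boot all_order all_algebra.
Set Implicit Arguments. Unset Strict Implicit. Unset Printing Implicit Defensive.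
Import Order.TTheory GRing.Theory Num.Theory.
Local Open Scope ring_scope.

(* Points of R^n are represented by rational column vectors 'cV[rat]_n;
   since all data are integral, polyhedra, faces and LP optima are rational. *)

Definition padic (p : nat) (r : rat) : Prop :=
  exists (a : int) (k : nat), r = a%:~R / (p ^ k)%:R.

Definition padic_vec (p m : nat) (y : 'cV[rat]_m) : Prop :=
  forall i, padic p (y i 0).

Definition dual_feasible (m n : nat) (A : 'M[int]_(m, n)) (w : 'cV[int]_n)
  (y : 'cV[rat]_m) : Prop :=
  (forall i, 0 <= y i 0) /\
  (forall j, \sum_(i < m) (A i j)%:~R * y i 0 = (w j 0)%:~R).

Definition dual_obj (m : nat) (b : 'cV[int]_m) (y : 'cV[rat]_m) : rat :=
  \sum_(i < m) (b i 0)%:~R * y i 0.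

Definition dual_optimal (m n : nat) (A : 'M[int]_(m, n)) (b : 'cV[int]_m)
  (w : 'cV[int]_n) (y : 'cV[rat]_m) : Prop :=
  dual_feasible A w y /\
  (forall y', dual_feasible A w y' -> dual_obj b y <= dual_obj b y').

Definition totally_dual_padic (p m n : nat) (A : 'M[int]_(m, n))
  (b : 'cV[int]_m) : Prop :=
  forall w : 'cV[int]_n,
    (exists y, dual_optimal A b w y) ->
    exists y, dual_optimal A b w y /\ padic_vec p y.

Definition in_poly (m n : nat) (A : 'M[int]_(m, n)) (b : 'cV[int]_m)
  (x : 'cV[rat]_n) : Prop :=
  forall i, \sum_(j < n) (A i j)%:~R * x j 0 <= (b i 0)%:~R.

Definition dotv (n : nat) (c x : 'cV[rat]_n) : rat := \sum_(j < n) c j 0 * x j 0.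

(* F is a face of P: F = {x in P : c^T x = d} for some inequality
   c^T x <= d valid for P (c = 0, d = 0 gives P itself). *)
Definition is_face (m n : nat) (A : 'M[int]_(m, n)) (b : 'cV[int]_m)
  (F : 'cV[rat]_n -> Prop) : Prop :=
  exists (c : 'cV[rat]_n) (d : rat),
    (forall x, in_poly A b x -> dotv c x <= d) /\
    (forall x, F x <-> (in_poly A b x /\ dotv c x = d)).

Definition int_point (n : nat) (x : 'cV[rat]_n) : Prop :=
  exists z : 'cV[int]_n, x = map_mx (fun t : int => t%:~R) z.

Definition integral_polyhedron (m n : nat) (A : 'M[int]_(m, n))
  (b : 'cV[int]_m) : Prop :=
  forall F, is_face A b F -> (exists x, F x) -> exists x, F x /\ int_point x.

(* Main.v *)
Require Import Defs.
From mathcomp Require Import all_boot all_order all_algebra ring lra zify.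
Import Order.TTheory GRing.Theory Num.Theory.
Local Open Scope ring_scope.
Set Implicit Arguments.
Section S.
Lemma padic_int p (z : int) : padic p z%:~R.
Proof. by exists z, 0%N; rewrite expn0 divr1. Qed.

Lemma padic_add p r s : prime p -> padic p r -> padic p s -> padic p (r + s).
Proof.
move=> pp [a [k ->]] [c [l ->]].
have pk : (p ^ k)%:R != 0 :> rat by rewrite pnatr_eq0 -lt0n expn_gt0 prime_gt0.
have pl : (p ^ l)%:R != 0 :> rat by rewrite pnatr_eq0 -lt0n expn_gt0 prime_gt0.
exists (a * (p ^ l)%:R + c * (p ^ k)%:R), (k + l)%N.
rewrite expnD natrM rmorphD /= !rmorphM /= !natz !pmulrn. field. by rewrite pk pl. Qed.

Lemma padic_mul p r s : padic p r -> padic p s -> padic p (r * s).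
Proof.
move=> [a [k ->]] [c [l ->]].
exists (a * c), (k + l)%N.
by rewrite expnD natrM rmorphM /= invfM; rewrite mulrACA.
Qed.

Lemma padic_pq p q r : prime p -> prime q -> p != q ->
  padic p r -> padic q r -> exists z : int, r = z%:~R.
Proof.
move=> pp pq npq [a [k ->]] [c [l e]].
have pk : (p ^ k)%:R != 0 :> rat by rewrite pnatr_eq0 -lt0n expn_gt0 prime_gt0.
have ql : (q ^ l)%:R != 0 :> rat by rewrite pnatr_eq0 -lt0n expn_gt0 prime_gt0.
have e2 : a * (q ^ l)%:R = c * (p ^ k)%:R :> int.
  apply: (@intr_inj rat); rewrite !rmorphM /=.
  move/(congr1 (fun x => x * (p ^ k)%:R * (q ^ l)%:R)): e => e.
  rewrite divfK // mulrAC divfK // in e. rewrite !natz. exact: e.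
have cop : coprime (p ^ k) (q ^ l).
  by rewrite coprimeXl // coprime_sym coprimeXl // prime_coprime // dvdn_prime2 // eq_sym.
have hd : (p ^ k %| `|a|)%N.
  rewrite -(Gauss_dvdl _ cop).
  have -> : (`|a| * q ^ l = `|c| * p ^ k)%N.
    by move/(congr1 absz): e2; rewrite !abszM !natz.
  exact: dvdn_mull.
have hz : ((p ^ k)%:Z %| a)%Z by rewrite dvdzE.
exists (a %/ (p ^ k)%:Z)%Z.
rewrite -{1}(divzK hz) rmorphM /=.
have -> : ((p ^ k)%:Z)%:~R = (p ^ k)%:R :> rat by [].
by rewrite mulfK.
Qed.
Variables (m n : nat) (A : 'M[int]_(m, n)) (b : 'cV[int]_m).

Lemma dual_swap (w : 'cV[int]_n) (y : 'cV[rat]_m) (x : 'cV[rat]_n) : dual_feasible A w y ->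
  \sum_(j < n) (w j 0)%:~R * x j 0 =
  \sum_(i < m) y i 0 * \sum_(j < n) (A i j)%:~R * x j 0.
Proof.
move=> [_ hw].
under eq_bigr => j _ do rewrite -hw mulr_suml.
rewrite exchange_big /=; apply: eq_bigr => i _; rewrite mulr_sumr.
by apply: eq_bigr => j _; rewrite mulrAC mulrC.
Qed.

Lemma weak_dual (w : 'cV[int]_n) (y : 'cV[rat]_m) (x : 'cV[rat]_n) : in_poly A b x -> dual_feasible A w y ->
  \sum_(j < n) (w j 0)%:~R * x j 0 <= dual_obj b y.
Proof.
move=> hx hy; rewrite (dual_swap x hy) /dual_obj; apply: ler_sum => i _.
rewrite mulrC; apply: ler_wpM2r; first by case: hy.
exact: hx.
Qed.

Lemma cs_dual (w : 'cV[int]_n) (y : 'cV[rat]_m) (x : 'cV[rat]_n) : dual_feasible A w y ->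
  (forall i, y i 0 != 0 -> \sum_(j < n) (A i j)%:~R * x j 0 = (b i 0)%:~R) ->
  dual_obj b y = \sum_(j < n) (w j 0)%:~R * x j 0.
Proof.
move=> hy hc; rewrite (dual_swap x hy) /dual_obj; apply: eq_bigr => i _.
have [->|nz] := eqVneq (y i 0) 0; first by rewrite !mulr0 mul0r.
by rewrite hc // mulrC.
Qed.


Lemma padic_obj p (y : 'cV[rat]_m) : prime p -> padic_vec p y -> padic p (dual_obj b y).
Proof.
move=> pp hy; rewrite /dual_obj; apply: (big_ind (padic p)).
- by exists 0, 0%N; rewrite mul0r.
- by move=> u v; apply: padic_add.
- by move=> i _; apply: padic_mul; [apply: padic_int | apply: hy].
Qed.

Lemma opt_int p q (w : 'cV[int]_n) (y : 'cV[rat]_m) : prime p -> prime q -> p != q ->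
  totally_dual_padic p A b -> totally_dual_padic q A b ->
  dual_optimal A b w y -> exists z : int, dual_obj b y = z%:~R.
Proof.
move=> pp pq npq tp tq hy.
have [y1 [[f1 o1] h1]] := tp w (ex_intro _ y hy).
have [y2 [[f2 o2] h2]] := tq w (ex_intro _ y hy).
have e1 : dual_obj b y = dual_obj b y1.
  by apply/eqP; rewrite eq_le (o1 _ hy.1) andbT; apply: hy.2.
have e2 : dual_obj b y = dual_obj b y2.
  by apply/eqP; rewrite eq_le (o2 _ hy.1) andbT; apply: hy.2.
apply: (padic_pq pp pq npq).
- by rewrite e1; apply: padic_obj.
- by rewrite e2; apply: padic_obj.
Qed.

Definition ax i (x : 'cV[rat]_n) := \sum_(j < n) (A i j)%:~R * x j 0.

Lemma axD i x (t : rat) v : ax i (x + t *: v) = ax i x + t * ax i v.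
Proof.
rewrite /ax mulr_sumr -big_split /=; apply: eq_bigr => j _.
by rewrite !mxE; ring.
Qed.

Lemma dotvD (c x : 'cV[rat]_n) (t : rat) v : dotv c (x + t *: v) = dotv c x + t * dotv c v.
Proof.
rewrite /dotv mulr_sumr -big_split /=; apply: eq_bigr => j _.
by rewrite !mxE; ring.
Qed.

Definition tight (x : 'cV[rat]_n) : {set 'I_m} := [set i | ax i x == (b i 0)%:~R].

Lemma back_step x1 v : in_poly A b x1 -> (forall i, i \in tight x1 -> ax i v = 0) ->
  exists2 t : rat, 0 < t & in_poly A b (x1 + t *: v).
Proof.
move=> hx hv.
pose s i := (b i 0)%:~R - ax i x1.
pose K := \sum_(i | i \notin tight x1) `|ax i v| / s i.
have K0 : 0 <= K by apply: sumr_ge0 => i _; apply: divr_ge0 => //; rewrite subr_ge0; apply: hx.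
exists (1 / (1 + K)); first by rewrite mul1r invr_gt0; lra.
move=> i; rewrite -/(ax i _) axD.
case: (boolP (i \in tight x1)) => hi.
  by rewrite hv // mulr0 addr0; move: hi; rewrite inE => /eqP ->.
have si : 0 < s i.
  rewrite subr_gt0 lt_neqAle; move: hi; rewrite inE => -> /=; apply: hx.
have hK : `|ax i v| / s i <= K.
  rewrite /K (bigD1 i) //= lerDl; apply: sumr_ge0 => k /andP[hk _].
  apply: divr_ge0 => //; rewrite subr_ge0; apply: hx.
have h1 : ax i v <= `|ax i v| by apply: ler_norm.
have h2 : `|ax i v| <= K * s i by rewrite -ler_pdivrMr.
have : 1 / (1 + K) * ax i v <= 1 / (1 + K) * (K * s i).
  by apply: ler_wpM2l; [rewrite divr_ge0 // addr_ge0 | apply: le_trans h2].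
have h3 : 1 / (1 + K) * (K * s i) <= s i.
  rewrite mul1r ler_pdivrMl ?ltr_pwDl //; nra.
rewrite /s in h3 *; move=> h4; have := le_trans h4 h3; lra.
Qed.


Lemma axZ i (t : rat) v : ax i (t *: v) = t * ax i v.
Proof. by rewrite /ax mulr_sumr; apply: eq_bigr => j _; rewrite mxE; ring. Qed.

Lemma dotvZ (c : 'cV[rat]_n) (t : rat) v : dotv c (t *: v) = t * dotv c v.
Proof. by rewrite /dotv mulr_sumr; apply: eq_bigr => j _; rewrite mxE; ring. Qed.

Lemma face_step (F : 'cV[rat]_n -> Prop) c d x1 x :
  (forall y, in_poly A b y -> dotv c y <= d) ->
  (forall y, F y <-> in_poly A b y /\ dotv c y = d) -> F x1 ->
  (forall i, i \in tight x1 -> ax i x = (b i 0)%:~R) ->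
  F x \/ exists x2, F x2 /\ (#|tight x1| < #|tight x2|)%N.
Proof.
move=> hc hF hx1 hT.
have [px1 dx1] := (hF x1).1 hx1.
pose v := x - x1.
have xv : x = x1 + 1 *: v by rewrite scale1r /v addrC subrK.
have hv : forall i, i \in tight x1 -> ax i v = 0.
  move=> i hi; have := hT i hi; rewrite xv axD mul1r.
  move: hi; rewrite inE => /eqP; lra.
have cv : dotv c v = 0.
  have [t t0 ht] := back_step px1 hv.
  have hv' : forall i, i \in tight x1 -> ax i ((-1) *: v) = 0.
    by move=> i hi; rewrite axZ hv // mulr0.
  have [t' t0' ht'] := back_step px1 hv'.
  have := hc _ ht; have := hc _ ht'; rewrite !dotvD dotvZ dx1.
  nra.
have dxd : forall t : rat, dotv c (x1 + t *: v) = d by move=> t; rewrite dotvD cv mulr0 addr0.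
case: (boolP [forall i, ax i x <= (b i 0)%:~R]) => [/forallP hp | /forallP hp].
  by left; apply/hF; split; [move=> i; apply: hp | rewrite xv dxd].
right.
have [i0 hi0] : exists i0, ~~ (ax i0 x <= (b i0 0)%:~R).
  by apply/existsP; rewrite -negb_forall; apply/forallP.
pose S := fun i => (i \notin tight x1) && (0 < ax i v).
have hpx1 : forall i, ax i x1 <= (b i 0)%:~R by move=> i; apply: px1.
have S0 : S i0.
  have hpos : 0 < ax i0 v.
    have := hpx1 i0; move: hi0; rewrite xv axD mul1r -ltNge. lra.
  apply/andP; split => //; apply/negP => hin; move: hpos; rewrite hv //; lra.
pose ratio := fun i => ((b i 0)%:~R - ax i x1) / ax i v.
case: (arg_minP ratio S0) => ist /andP[nis posis] hmin.
pose t := ratio ist.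
have t0 : 0 < t.
  rewrite /t /ratio divr_gt0 // subr_gt0 lt_neqAle hpx1 andbT.
  by move: nis; rewrite inE.
exists (x1 + t *: v); split.
  apply/hF; split; last exact: dxd.
  move=> i; rewrite -/(ax _ _) axD.
  case: (boolP (i \in tight x1)) => hi.
    by rewrite hv // mulr0 addr0; move: hi; rewrite inE => /eqP ->.
  case: (ltrP 0 (ax i v)) => hpos.
    have := hmin i; rewrite /S hi hpos => /(_ isT); rewrite /ratio -/t => hle.
    rewrite -lerBrDl; rewrite ler_pdivlMr // in hle; by rewrite mulrC.
  have := hpx1 i; nra.
apply: proper_card; apply/properP; split.
  apply/subsetP => i hi; rewrite inE axD hv // mulr0 addr0.
  by move: hi; rewrite inE.
exists ist => //; rewrite inE axD /t /ratio. have -> : ((b ist 0)%:~R - ax ist x1) / ax ist v * ax ist v = (b ist 0)%:~R - ax ist x1 by rewrite divfK ?gt_eqF. by rewrite addrC subrK.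
Qed.


Notation fr := (map_mx (intr : int -> rat)).

Lemma snf_part (Hopt : forall (w : 'cV[int]_n) (y : 'cV[rat]_m), dual_optimal A b w y ->
                  exists z : int, dual_obj b y = z%:~R)
  (T : {set 'I_m}) x1 : in_poly A b x1 ->
  (forall i, i \in T -> ax i x1 = (b i 0)%:~R) ->
  exists x, int_point x /\ forall i, i \in T -> ax i x = (b i 0)%:~R.
Proof.
move=> px1 hT.
pose M : 'M[int]_(m, n) := \matrix_(i, j) (if i \in T then A i j else 0).
have [L uL [R uR [dd _ hM]]] := int_Smith_normal_form M.
set D := \matrix_(i, j) _ in hM.
have axM : forall x i, i \in T -> ax i x = (fr M *m x) i 0.
  by move=> x i hi; rewrite /ax mxE; apply: eq_bigr => j _; rewrite !mxE hi.
have hMr : fr M = fr L *m fr D *m fr R by rewrite hM !map_mxM.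
have RRi : fr R *m fr (invmx R) = 1%:M by rewrite -map_mxM mulmxV // map_mx1.
have LiL : fr (invmx L) *m fr L = 1%:M by rewrite -map_mxM mulVmx // map_mx1.
pose z0 := fr R *m x1.
have z0E : z0 = fr R *m x1 by [].
clearbody z0.
case: (boolP [forall j, (z0 j 0 \is a Num.int) || [forall i, D i j == 0]]) => [/forallP hc | ].
  pose z : 'cV[int]_n := \col_j (if z0 j 0 \is a Num.int then Num.floor (z0 j 0) else 0).
  have hDz : fr D *m fr z = fr D *m z0.
    apply/matrixP => i k; rewrite (ord1 k) !mxE; apply: eq_bigr => j _; rewrite !mxE.
    case: (boolP (z0 j 0 \is a Num.int)) => hj; first by rewrite floorK.
    have := hc j; rewrite (negbTE hj) /= => /forallP /(_ i) /eqP; rewrite mxE => ->.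
    by rewrite !mul0r.
  exists (fr (invmx R *m z)); split; first by exists (invmx R *m z).
  move=> i hi; rewrite axM // -hT // axM //; congr (_ i 0).
  rewrite hMr map_mxM -!mulmxA (mulmxA (fr R)) RRi mul1mx hDz.
  by rewrite z0E !mulmxA.
move/forallPn => [j]; rewrite negb_or => /andP[nzj /forallPn [i Dij]].
set del := D i j.
have hrowD : forall k, D i k = if k == j then del else 0.
  move=> k; case: eqP => [-> //|nkj].
  move: Dij; rewrite /del !mxE.
  have [eij|nij] := eqVneq (i : nat) j; last by rewrite mulr0n eqxx.
  have : (i : nat) != k by rewrite eij; apply/eqP => e; apply: nkj; apply: val_inj; rewrite /= -e.
  by move/negbTE => -> _; rewrite mulr0n.
have del0 : (del%:~R : rat) != 0.
  by rewrite intr_eq0; move: Dij; rewrite hrowD eqxx.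
pose yv : 'rV[rat]_m := (del%:~R)^-1 *: ('e_i *m fr (invmx L)).
have eiD : 'e_i *m fr D = (del%:~R : rat) *: ('e_j : 'rV[rat]_n).
  apply/matrixP => a k; rewrite -rowE (ord1 a) !mxE; have := hrowD k; rewrite mxE => ->.
  by rewrite eqxx /=; case: eqP => _; rewrite ?mulr1 ?mulr0.
have hyM : yv *m fr M = row j (fr R).
  rewrite /yv -scalemxAl hMr !mulmxA -(mulmxA _ (fr (invmx L))) LiL mulmx1 eiD.
  by rewrite -scalemxAl scalerA mulVf // scale1r rowE.
pose kk := fun i => - Num.floor (yv 0 i).
pose yt : 'cV[rat]_m := \col_i (if i \in T then yv 0 i + (kk i)%:~R else 0).
pose w : 'cV[int]_n := \col_k (R j k + \sum_(i in T) kk i * A i k).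
have feas : dual_feasible A w yt.
  split.
    move=> a; rewrite mxE; case: ifP => // _.
    by rewrite /kk rmorphN /= subr_ge0 floor_le.
  move=> k.
  have -> : (w k 0)%:~R = (yv *m fr M) 0 k + \sum_(a in T) ((kk a * A a k)%:~R : rat).
    by rewrite hyM !mxE rmorphD rmorph_sum.
  rewrite mxE [X in _ = _ + X]big_mkcond /= -big_split /=; apply: eq_bigr => a _.
  rewrite !mxE; case: ifP => _; last by rewrite mulr0 mulr0 add0r.
  by rewrite rmorphM /=; ring.
have hcs : forall a, yt a 0 != 0 -> \sum_(k < n) (A a k)%:~R * x1 k 0 = (b a 0)%:~R.
  move=> a; rewrite mxE; case: ifP => [ha _|]; last by rewrite eqxx.
  exact: hT.
have opt : dual_optimal A b w yt.
  split => // y' fy'; rewrite (cs_dual x1 feas hcs); exact: weak_dual.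
have [Z hZ] := Hopt _ _ opt.
rewrite (cs_dual x1 feas hcs) in hZ.
have : z0 j 0 = (Z - \sum_(a in T) kk a * b a 0)%:~R.
  rewrite rmorphB /= -hZ rmorph_sum /=.
  have -> : \sum_(k < n) (w k 0)%:~R * x1 k 0 =
     \sum_(k < n) ((R j k)%:~R * x1 k 0) + \sum_(a in T) (kk a)%:~R * ax a x1.
    rewrite /ax; under eq_bigr => k _ do rewrite mxE rmorphD rmorph_sum /= mulrDl mulr_suml.
    rewrite big_split /=; congr (_ + _).
    rewrite exchange_big /=; apply: eq_bigr => a _; rewrite mulr_sumr.
    by apply: eq_bigr => k _; rewrite rmorphM /= mulrA.
  rewrite z0E mxE.
  under [X in _ = _ + X - _]eq_bigr => a ha do rewrite hT //.
  rewrite [X in _ - X](eq_bigr (fun a => (kk a)%:~R * (b a 0)%:~R)); last by move=> a _; rewrite rmorphM.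
  by rewrite addrK; apply: eq_bigr => k _; rewrite mxE.
by move=> e; move: nzj; rewrite e intr_int.
Qed.
Lemma main_int (Hopt : forall (w : 'cV[int]_n) (y : 'cV[rat]_m), dual_optimal A b w y ->
                  exists z : int, dual_obj b y = z%:~R) F :
  is_face A b F -> (exists x, F x) -> exists x, F x /\ int_point x.
Proof.
move=> [c [d [hc hF]]] [x0 hx0].
suff : forall k x1, (m - #|tight x1| < k)%N -> F x1 -> exists x, F x /\ int_point x.
  by move/(_ (m - #|tight x0|).+1 x0); apply.
elim=> [//|k IH] x1 hk hx1.
have [px1 _] := (hF x1).1 hx1.
have hT : forall i, i \in tight x1 -> ax i x1 = (b i 0)%:~R by move=> i; rewrite inE => /eqP.
have [x [ix hx]] := snf_part Hopt px1 hT.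
have [Fx|[x2 [Fx2 lt]]] := @face_step F c d x1 x hc hF hx1 hx; first by exists x.
apply: (IH x2) => //.
have : (#|tight x2| <= m)%N by have := max_card (mem (tight x2)); rewrite card_ord.
lia.
Qed.
End S.

Unset Implicit Arguments.
Local Close Scope ring_scope.

Theorem theorem1p5 (m n p q : nat) (A : 'M[int]_(m, n)) (b : 'cV[int]_m) :
  prime p -> prime q -> p != q ->
  totally_dual_padic p A b -> totally_dual_padic q A b ->
  integral_polyhedron A b.
Proof.
move=> pp pq npq tp tq F hF hne.
have Hopt : forall (w : 'cV[int]_n) (y : 'cV[rat]_m), dual_optimal A b w y ->
    exists z : int, dual_obj b y = (z%:~R)%R.
  by move=> w y hy; exact: (opt_int pp pq npq tp tq hy).
exact: (@main_int m n A b Hopt F hF hne).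
Qed.
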